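(* Consider $K$ sensors, each taking a binary decision $b_k\in\{0,1\}$, $k=1,\dots,K$, with conditionally i.i.d. decisions satisfying $P_D\triangleq P(b_k=1\mid\mathcal H_1)>P_F\triangleq P(b_k=1\mid\mathcal H_0)$. Each decision is sent over a binary symmetric channel with bit-error probability $P_{e,k}\le \tfrac12$, and the fusion center observes $y_k\in\{0,1\}$, with $y_k=b_k$ with probability $1-P_{e,k}$ and $y_k=1-b_k$ with probability $P_{e,k}$. For $P_1\in[0,1]$ let $\alpha_k(P_1)=(1-2P_{e,k})P_1+P_{e,k}$ and $\beta_k(P_1)=1-\alpha_k(P_1)$. Consider the statistics $$\Lambda_{\mathrm{LRT}}=\sum_{k=1}^K\Big\{y_k\ln\frac{\alpha_k(P_D)}{\alpha_k(P_F)}+(1-y_k)\ln\frac{\beta_k(P_D)}{\beta_k(P_F)}\Big\},\qquad \Lambda_{\mathrm{IS}}=\sum_{k=1}^K(2y_k-1)\ln\frac{1-P_{e,k}}{P_{e,k}},$$ $$\Lambda_{\mathrm{LOD}}=\Big(\sum_{k=1}^K\frac{(1-2P_{e,k})[(y_k-P_{e,k})-(1-2P_{e,k})P_F]}{\alpha_k(P_F)\beta_k(P_F)}\Big)\Big(\sum_{k=1}^K\frac{(1-2P_{e,k})^2}{\alpha_k(P_F)\beta_k(P_F)}\Big)^{-1/2},$$ $$\Lambda_{\mathrm{Wu}}=\hat P_D-P_F,\quad \hat P_D=\frac1K\sum_{k=1}^K[(1+2P_{e,k})y_k-P_{e,k}].$$ Then, when the SNR is low at each link (i.e. each $P_{e,k}$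 is close to $\tfrac12$, so that each per-sensor coefficient of the statistics may be replaced by its first-order Taylor expansion around $P_{e,k}=\tfrac12$), $\Lambda_{\mathrm{IS}}$ and $\Lambda_{\mathrm{LOD}}$ approach $\Lambda_{\mathrm{LRT}}$ (their low-SNR approximations are equivalent to that of $\Lambda_{\mathrm{LRT}}$, hence yield the same detection performance), while $\Lambda_{\mathrm{Wu}}$ does not. The $P_{e,k}$ need not be equal.
   Context: Two statistics are called equivalent if they are equal up to a scaling factor and an additive term, both finite and independent of $\boldsymbol y=(y_1,\dots,y_K)$, so that threshold tests based on them have the same performance. Low SNR at link $k$ corresponds to $P_{e,k}\to\tfrac12$. Each statistic is used in a test comparing it with a threshold to decide between $\mathcal H_0$ and $\mathcal H_1$. *)

(* Defs.v *)
From HB Require Import structures.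
From mathcomp Require Import all_boot all_order all_algebra.
From mathcomp Require Import all_classical all_reals all_analysis.
Set Implicit Arguments. Unset Strict Implicit. Unset Printing Implicit Defensive.
Import Order.TTheory GRing.Theory Num.Theory.
Local Open Scope ring_scope.

Section Defs.
Variable R : realType.

Definition alpha (pe P1 : R) : R := (1 - 2 * pe) * P1 + pe.
Definition beta (pe P1 : R) : R := 1 - alpha pe P1.

Definition lin_half (f : R -> R) (x : R) : R :=
  f (1 / 2) + derive1 f (1 / 2) * (x - 1 / 2).

Definition LRT_term (PD PF : R) (pe y : R) : R :=
  y * ln (alpha pe PD / alpha pe PF) + (1 - y) * ln (beta pe PD / beta pe PF).
Definition IS_term (pe y : R) : R := (2 * y - 1) * ln ((1 - pe) / pe).
Definition LOD_term (PF : R) (pe y : R) : R :=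
  (1 - 2 * pe) * ((y - pe) - (1 - 2 * pe) * PF) / (alpha pe PF * beta pe PF).
Definition Wu_term (pe y : R) : R := (1 + 2 * pe) * y - pe.

Definition LOD_norm (K : nat) (PF : R) (Pe : 'I_K -> R) : R :=
  (Num.sqrt (\sum_(k < K) (1 - 2 * Pe k) ^+ 2 / (alpha (Pe k) PF * beta (Pe k) PF)))^-1.

Definition Lambda_LRT (K : nat) (PD PF : R) (Pe : 'I_K -> R) (y : 'I_K -> bool) : R :=
  \sum_(k < K) LRT_term PD PF (Pe k) (y k)%:R.
Definition Lambda_IS (K : nat) (Pe : 'I_K -> R) (y : 'I_K -> bool) : R :=
  \sum_(k < K) IS_term (Pe k) (y k)%:R.
Definition Lambda_LOD (K : nat) (PF : R) (Pe : 'I_K -> R) (y : 'I_K -> bool) : R :=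
  (\sum_(k < K) LOD_term PF (Pe k) (y k)%:R) * LOD_norm PF Pe.
Definition Lambda_Wu (K : nat) (PF : R) (Pe : 'I_K -> R) (y : 'I_K -> bool) : R :=
  K%:R^-1 * (\sum_(k < K) Wu_term (Pe k) (y k)%:R) - PF.

(* Low-SNR approximations: each per-sensor term (i.e. each per-sensor
   coefficient) is replaced by its first-order Taylor expansion in Pe_k
   around Pe_k = 1/2; y-independent normalisations are kept exact. *)
Definition Lambda_LRT_low (K : nat) (PD PF : R) (Pe : 'I_K -> R) (y : 'I_K -> bool) : R :=
  \sum_(k < K) lin_half (fun p => LRT_term PD PF p (y k)%:R) (Pe k).
Definition Lambda_IS_low (K : nat) (Pe : 'I_K -> R) (y : 'I_K -> bool) : R :=
  \sum_(k < K) lin_half (fun p => IS_term p (y k)%:R) (Pe k).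
Definition Lambda_LOD_low (K : nat) (PF : R) (Pe : 'I_K -> R) (y : 'I_K -> bool) : R :=
  (\sum_(k < K) lin_half (fun p => LOD_term PF p (y k)%:R) (Pe k)) * LOD_norm PF Pe.
Definition Lambda_Wu_low (K : nat) (PF : R) (Pe : 'I_K -> R) (y : 'I_K -> bool) : R :=
  K%:R^-1 * (\sum_(k < K) lin_half (fun p => Wu_term p (y k)%:R) (Pe k)) - PF.

(* Two statistics are equivalent if L1 = a * L2 + b with a > 0 and b
   finite constants independent of y (threshold tests then coincide). *)
Definition equivalent (K : nat) (L1 L2 : ('I_K -> bool) -> R) : Prop :=
  exists a b : R, 0 < a /\ forall y, L1 y = a * L2 y + b.

End Defs.

(* Main.v *)
Require Import Defs.
From HB Require Import structures.
From mathcomp Require Import all_boot all_order all_algebra.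
From mathcomp Require Import all_classical all_reals all_analysis.
From mathcomp Require Import ring lra.
Import Order.TTheory GRing.Theory Num.Theory.
Local Open Scope ring_scope.

Section S.
Variable R : realType.

Lemma lin_halfE {f : R -> R} {d} x : is_derive (1/2:R) 1 f d ->
  lin_half f x = f (1/2) + d * (x - 1/2).
Proof. by move=> H; rewrite /lin_half derive1E derive_val. Qed.

Lemma is_derive_aff (a b x : R) : is_derive x 1 (fun p : R => a * p + b) a.
Proof.
have H := is_deriveD (is_deriveZ a (is_derive_id x (1:R))) (is_derive_cst b x (1:R)).
apply: is_derive_eq H _.
by rewrite /= addr0 /GRing.scale /= mulr1.
Qed.

Lemma is_derive_alpha (P x : R) : is_derive x 1 (fun p : R => alpha p P) (1 - 2 * P).
Proof.
have -> : (fun p : R => alpha p P) = (fun p => (1 - 2 * P) * p + P).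
  by apply: funext => p; rewrite /alpha; ring.
exact: is_derive_aff.
Qed.

Lemma is_derive_beta (P x : R) : is_derive x 1 (fun p : R => beta p P) (- (1 - 2 * P)).
Proof.
have -> : (fun p : R => beta p P) = (fun p => (- (1 - 2 * P)) * p + (1 - P)).
  by apply: funext => p; rewrite /beta /alpha; ring.
exact: is_derive_aff.
Qed.

Lemma is_derive_mul {f g : R -> R} {x df dg : R} : is_derive x 1 f df -> is_derive x 1 g dg ->
  is_derive x 1 (fun p => f p * g p) (f x * dg + g x * df).
Proof. move=> Hf Hg; exact: is_deriveM Hf Hg. Qed.

Lemma is_derive_inv {f : R -> R} {x df : R} : f x != 0 -> is_derive x 1 f df ->
  is_derive x 1 (fun p => (f p)^-1) (- (f x) ^- 2 * df).
Proof. move=> H Hf; exact: is_deriveV H Hf. Qed.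

Lemma is_derive_lnc {f : R -> R} {x df : R} : 0 < f x -> is_derive x 1 f df ->
  is_derive x 1 (fun p => ln (f p)) ((f x)^-1 * df).
Proof. move=> H Hf. have := is_derive1_comp (is_derive1_ln H) Hf. by []. Qed.

Lemma alpha_half (P : R) : alpha (1/2) P = 1/2.
Proof. rewrite /alpha; by field. Qed.
Lemma beta_half (P : R) : beta (1/2) P = 1/2.
Proof. by rewrite /beta alpha_half; field. Qed.

Lemma is_derive_ratio (P Q : R) (al : R -> R -> R) dP dQ :
  (forall P, al (1/2) P = 1/2) ->
  is_derive (1/2:R) 1 (fun p => al p P) dP ->
  is_derive (1/2:R) 1 (fun p => al p Q) dQ ->
  is_derive (1/2:R) 1 (fun p => ln (al p P / al p Q)) (2 * dP - 2 * dQ).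
Proof.
move=> h hP hQ.
have n0 : (1/2 : R) != 0 by [].
have hi := is_derive_inv _ hQ.
rewrite h in hi.
have hm := is_derive_mul hP (hi n0).
have pos : 0 < al (1/2) P / al (1/2) Q by rewrite !h.
have hl := @is_derive_lnc (fun p => al p P / al p Q) _ _ pos hm.
apply: is_derive_eq hl _.
by rewrite !h; field.

Qed.

Lemma LRT_low (PD PF y x : R) :
  lin_half (fun p => LRT_term PD PF p y) x = 4*(PD-PF)*(1-2*y)*(x-1/2).
Proof.
have hA := is_derive_ratio PD PF (@alpha R) _ _ alpha_half (is_derive_alpha _ _) (is_derive_alpha _ _).
have hB := is_derive_ratio PD PF (@beta R) _ _ beta_half (is_derive_beta _ _) (is_derive_beta _ _).
have h1 := is_derive_mul (is_derive_cst y (1/2:R) 1) hA.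
have h2 := is_derive_mul (is_derive_cst (1 - y) (1/2:R) 1) hB.
have h3 := is_deriveD h1 h2.
have E : forall (f g : R -> R) t, (f + g) t = f t + g t by [].
rewrite (lin_halfE _ h3) /LRT_term E /= !alpha_half !beta_half divff ?ln1; last by [].
by field.
Qed.
Lemma addfE (f g : R -> R) t : (f + g) t = f t + g t.
Proof. by []. Qed.

Lemma aff' (a b : R) : is_derive (1/2:R) 1 (fun p : R => a * p + b) a.
Proof. exact: is_derive_aff. Qed.

Lemma IS_low (y x : R) :
  lin_half (fun p => IS_term p y) x = -4*(2*y-1)*(x-1/2).
Proof.
have n0 : (1 * (1/2) + 0 : R) != 0 by rewrite mul1r addr0.
have hv := @is_derive_inv (fun p : R => 1 * p + 0) _ _ n0 (aff' 1 0).
have hu := is_derive_mul (aff' (-1) 1) hv.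
have pos : 0 < ((-1) * (1/2) + 1) * ((1 * (1/2) + 0)^-1 : R).
  by apply: mulr_gt0; [lra | rewrite invr_gt0; lra].
have hl := @is_derive_lnc (fun p : R => ((-1) * p + 1) * (1 * p + 0)^-1) _ _ pos hu.
have h := is_derive_mul (is_derive_cst (2 * y - 1) (1/2:R) 1) hl.
have -> : (fun p => IS_term p y) = (fun p => cst (2*y-1) p * ln (((-1) * p + 1) * (1 * p + 0)^-1)).
  by apply: funext => p; rewrite /IS_term /=; congr (_ * ln (_ * _^-1)); ring.
rewrite (lin_halfE _ h) /=.
have e1 : ((-1 * (1 / 2) + 1) / (1 * (1 / 2) + 0) : R) = 1 by field.
by rewrite e1 ln1 invr1; field.
Qed.
Lemma LOD_low (PF y x : R) :
  lin_half (fun p => LOD_term PF p y) x = -4*(2*y-1)*(x-1/2).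
Proof.
have hab := is_derive_mul (is_derive_alpha PF (1/2)) (is_derive_beta PF (1/2)).
have n0 : (alpha (1/2) PF * beta (1/2) PF : R) != 0 by rewrite alpha_half beta_half.
have hi := @is_derive_inv (fun p : R => alpha p PF * beta p PF) _ _ n0 hab.
have hcg := is_derive_mul (aff' (-2) 1) (aff' (2*PF-1) (y-PF)).
have h := is_derive_mul hcg hi.
have -> : (fun p => LOD_term PF p y) = (fun p : R => ((-2 * p + 1) * ((2*PF-1) * p + (y-PF))) * (alpha p PF * beta p PF)^-1).
  by apply: funext => p; rewrite /LOD_term; congr (_ * _); ring.
rewrite (lin_halfE _ h) /= !alpha_half !beta_half.
by field.
Qed.

Lemma Wu_low (y x : R) :
  lin_half (fun p => Wu_term p y) x = 2*y - 1/2 + (2*y-1)*(x-1/2).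
Proof.
have -> : (fun p => Wu_term p y) = (fun p : R => (2*y-1) * p + y).
  by apply: funext => p; rewrite /Wu_term; ring.
by rewrite (lin_halfE _ (aff' _ _)); field.
Qed.
End S.

Lemma diff_gen (R : realType) (K : nat) (G : 'I_K -> R -> R) (k : 'I_K) :
  \sum_(j < K) G j ((j == k)%:R) - \sum_(j < K) G j (((fun _ : 'I_K => false) j)%:R)
  = G k (true%:R) - G k (false%:R).
Proof.
rewrite (bigD1 k) //= eqxx [X in _ - X](bigD1 k) //=.
rewrite (eq_bigr (fun j => G j (false%:R))); last by move=> j /negbTE ->.
by rewrite opprD addrACA subrr addr0.
Qed.

Lemma diffW (R : realType) (K : nat) (PF : R) (Pe : 'I_K -> R) (k : 'I_K) :
  Lambda_Wu_low PF Pe (fun j => j == k) - Lambda_Wu_low PF Pe (fun _ => false)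
  = K%:R^-1 * (1 + 2 * Pe k).
Proof.
rewrite /Lambda_Wu_low opprB addrA subrK -mulrBr.
rewrite (@diff_gen R K (fun j v => lin_half (fun p => Wu_term p v) (Pe j))) /=.
by rewrite !Wu_low mulr1n mulr0n; congr (_ * _); field.
Qed.

Lemma diffL (R : realType) (K : nat) (PD PF : R) (Pe : 'I_K -> R) (k : 'I_K) :
  Lambda_LRT_low PD PF Pe (fun j => j == k) - Lambda_LRT_low PD PF Pe (fun _ => false)
  = 4 * (PD - PF) * (-2) * (Pe k - 1/2).
Proof.
rewrite /Lambda_LRT_low.
rewrite (@diff_gen R K (fun j v => lin_half (fun p => LRT_term PD PF p v) (Pe j))) /=.
by rewrite !LRT_low mulr1n mulr0n; field.
Qed.

Theorem proposition1 (R : realType) (K : nat) (PD PF : R) (Pe : 'I_K -> R) :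
  0 <= PF -> PF < PD -> PD <= 1 ->
  (forall k, 0 < Pe k /\ Pe k <= 1 / 2) ->
  (exists k, Pe k < 1 / 2) ->
  equivalent (Lambda_IS_low Pe) (Lambda_LRT_low PD PF Pe) /\
  equivalent (Lambda_LOD_low PF Pe) (Lambda_LRT_low PD PF Pe) /\
  ((exists i j, Pe i <> Pe j) ->
     ~ equivalent (Lambda_Wu_low PF Pe) (Lambda_LRT_low PD PF Pe)).
Proof.
move=> hPF hPD hPD1 hPe [k0 hk0].
have hD : 0 < PD - PF by rewrite subr_gt0.
have hDn : PD - PF != 0 by rewrite gt_eqF.
have eLRT y : Lambda_LRT_low PD PF Pe y = (PD - PF) * Lambda_IS_low Pe y.
  rewrite /Lambda_LRT_low /Lambda_IS_low mulr_sumr; apply: eq_bigr => k _.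
  by rewrite LRT_low IS_low; ring.
have eLOD y : Lambda_LOD_low PF Pe y = LOD_norm PF Pe * Lambda_IS_low Pe y.
  rewrite /Lambda_LOD_low /Lambda_IS_low mulrC; congr (_ * _); apply: eq_bigr => k _.
  by rewrite LOD_low IS_low.
have abpos k : 0 < alpha (Pe k) PF * beta (Pe k) PF.
  have [h1 h2] := hPe k.
  apply: mulr_gt0; rewrite /beta /alpha.
    nra.
  have : 0 <= (1 - 2 * Pe k) * (1 - PF) by apply: mulr_ge0; lra.
  nra.
have Npos : 0 < LOD_norm PF Pe.
  rewrite /LOD_norm invr_gt0 sqrtr_gt0 (bigD1 k0) //=.
  apply: ltr_pwDl.
    apply: divr_gt0; last exact: abpos.
    apply: exprn_gt0; lra.
  apply: sumr_ge0 => k _; apply: divr_ge0; last exact: ltW (abpos k).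
  exact: sqr_ge0.
split.
  exists (PD - PF)^-1, 0; split; first by rewrite invr_gt0.
  by move=> y; rewrite eLRT addr0 mulrA mulVf // mul1r.
split.
  exists (LOD_norm PF Pe / (PD - PF)), 0; split; first exact: divr_gt0.
  by move=> y; rewrite eLRT eLOD addr0; field.
move=> [i [j hij]] [a [b [_ H]]].
pose y0 := fun _ : 'I_K => false.
pose yk := fun (k : 'I_K) (j : 'I_K) => j == k.
have key k : K%:R^-1 * (1 + 2 * Pe k) = a * (4 * (PD - PF) * (-2) * (Pe k - 1/2)).
  rewrite -(diffW R K PF Pe k) -(diffL R K PD PF Pe k) (H (yk k)) (H y0); ring.
have Kpos : (0 < K)%N by case: i {hij} => i hi; exact: (leq_ltn_trans (leq0n i) hi).
have c0 : (K%:R^-1 : R) != 0 by rewrite invr_eq0 pnatr_eq0 -lt0n.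
apply: hij.
have e : K%:R^-1 * (2 * (Pe j - Pe i)) = 0.
  have E : forall c u v : R, c * (2 * (v - u)) =
    c * (1 + 2 * u) * (v - 1/2) - c * (1 + 2 * v) * (u - 1/2).
    by move=> c u v; field.
  by rewrite E !key; ring.
have h2 : (2:R) != 0 by [].
move/eqP: e; rewrite mulf_eq0 (negbTE c0) /= mulf_eq0 (negbTE h2) /= subr_eq0.
by move=> /eqP ->.
Qed.
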